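(* Let $n\geq 2$ and let $\mathcal{G}=(\mathcal{V},\mathcal{E})$ be a directed graph on $\mathcal{V}=\{1,\ldots,n\}$ in which every node has at least one outgoing edge. Let $A=(a_{ij})\in\mathbb{R}^{n\times n}$ be its hyperlink matrix, let $m\in(0,1)$, and let $x^*\in\mathbb{R}^n$ be the PageRank vector. Consider the iteration with initial states $x(0)=z(0)=\frac{m}{n}\mathbf{1}_n$ and, for $k\geq 0$, $$x(k+1)=x(k)+(1-m)Az(k),\qquad z(k+1)=(1-m)Az(k).$$ Then: (i) $z(k)\to 0$ as $k\to\infty$; (ii) $x(k)\leq x(k+1)\leq x^*$ for all $k\geq 0$; (iii) $x(k)\to x^*$ as $k\to\infty$.
   Context: Write $(i,j)\in\mathcal{E}$ if node (page) $i$ has a link to page $j$. $\mathcal{L}_j^{\text{out}}=\{i:(j,i)\in\mathcal{E}\}$ and $n_j=|\mathcal{L}_j^{\text{out}}|\geq 1$. The hyperlink matrix is defined by $a_{ij}=1/n_j$ if $i\in\mathcal{L}_j^{\text{out}}$ and $a_{ij}=0$ otherwise; it is column stochastic. The PageRank vector $x^*$ is the vector satisfying $x^*=(1-m)Ax^*+\frac{m}{n}\mathbf{1}_n$ and $\mathbf{1}_n^Tx^*=1$, where $\mathbf{1}_n$ is the all-ones vector. Inequalities between vectors are entrywise. *)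

(* Defs.v *)
From HB Require Import structures.
From mathcomp Require Import all_boot all_order all_algebra.
From mathcomp Require Import all_classical all_reals all_analysis.
Set Implicit Arguments. Unset Strict Implicit. Unset Printing Implicit Defensive.
Import Order.TTheory GRing.Theory Num.Theory.
Local Open Scope ring_scope.

(* A directed graph on the node set 'I_n (nodes 0..n-1 stand for 1..n):
   [e j i] means there is an edge (j,i), i.e. page j links to page i. *)

Definition out_nbrs (n : nat) (e : rel 'I_n) (j : 'I_n) : {set 'I_n} :=
  [set i | e j i].
Definition outdeg (n : nat) (e : rel 'I_n) (j : 'I_n) : nat := #|out_nbrs e j|.

Definition no_dangling (n : nat) (e : rel 'I_n) : Prop :=
  forall j : 'I_n, (1 <= outdeg e j)%N.

Definition hyperlink (R : fieldType) (n : nat) (e : rel 'I_n) : 'M[R]_n :=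
  \matrix_(i, j) (if i \in out_nbrs e j then (outdeg e j)%:R^-1 else 0).

Definition ones (R : ringType) (n : nat) : 'cV[R]_n := const_mx 1.

Definition is_pagerank (R : fieldType) (n : nat) (A : 'M[R]_n) (m : R)
    (xs : 'cV[R]_n) : Prop :=
  xs = (1 - m) *: (A *m xs) + (m / n%:R) *: ones R n /\
  (ones R n)^T *m xs = 1.

Fixpoint zseq (R : fieldType) (n : nat) (A : 'M[R]_n) (m : R) (k : nat)
  : 'cV[R]_n :=
  match k with
  | 0 => (m / n%:R) *: ones R n
  | k'.+1 => (1 - m) *: (A *m zseq A m k')
  end.

Fixpoint xseq (R : fieldType) (n : nat) (A : 'M[R]_n) (m : R) (k : nat)
  : 'cV[R]_n :=
  match k with
  | 0 => (m / n%:R) *: ones R n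
  | k'.+1 => xseq A m k' + (1 - m) *: (A *m zseq A m k')
  end.

Definition vle (R : numDomainType) (n : nat) (u v : 'cV[R]_n) : Prop :=
  forall i : 'I_n, u i 0 <= v i 0.

(* Main.v *)
Require Import Defs.
From HB Require Import structures.
From mathcomp Require Import all_boot all_order all_algebra.
From mathcomp Require Import all_classical all_reals all_analysis.
Import Order.TTheory GRing.Theory Num.Theory.
Import numFieldNormedType.Exports.
Local Open Scope classical_set_scope.
Local Open Scope ring_scope.

Section Aux.
Variables (R : realType) (n : nat) (A : 'M[R]_n) (c : R).
Hypothesis hA0 : forall i j, 0 <= A i j.
Hypothesis hA1 : forall j, \sum_i A i j = 1.
Hypothesis hc0 : 0 <= c.

Definition it (k : nat) (v : 'cV[R]_n) := iter k (fun u => c *: (A *m u)) v.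

Definition l1 (v : 'cV[R]_n) := \sum_i `|v i 0|.

Lemma l1_contr (v : 'cV[R]_n) : l1 (A *m v) <= l1 v.
Proof.
rewrite /l1.
apply: (@le_trans _ _ (\sum_i \sum_j A i j * `|v j 0|)).
  apply: ler_sum => i _; rewrite mxE.
  apply: (le_trans (ler_norm_sum _ _ _)); apply: ler_sum => j _.
  by rewrite normrM ger0_norm.
rewrite exchange_big /=; apply: ler_sum => j _.
by rewrite -mulr_suml hA1 mul1r.
Qed.

Lemma l1Z a (v : 'cV[R]_n) : l1 (a *: v) = `|a| * l1 v.
Proof. by rewrite /l1 mulr_sumr; apply: eq_bigr => i _; rewrite mxE normrM. Qed.

Lemma l1_it k (v : 'cV[R]_n) : l1 (it k v) <= c ^+ k * l1 v.
Proof.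
elim: k => [|k IH] /=; first by rewrite expr0 mul1r.
rewrite l1Z ger0_norm // exprS -mulrA ler_wpM2l //.
exact: le_trans (l1_contr _) IH.
Qed.

Lemma entry_le_l1 (v : 'cV[R]_n) i : `|v i 0| <= l1 v.
Proof.
rewrite /l1 (bigD1 i) //= lerDl; apply: sumr_ge0 => *; exact: normr_ge0.
Qed.

Lemma it_ge0 k (v : 'cV[R]_n) : (forall i, 0 <= v i 0) -> forall i, 0 <= it k v i 0.
Proof.
move=> hv; elim: k => [|k IH] i //=.
rewrite mxE mulr_ge0 // mxE; apply: sumr_ge0 => j _; exact: mulr_ge0.
Qed.

Lemma it_lin k (u v : 'cV[R]_n) : it k (u - v) = it k u - it k v.
Proof.
elim: k => [|k IH] //=; by rewrite IH mulmxBr scalerBr.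
Qed.

Lemma it_cvg (v : 'cV[R]_n) : c < 1 -> it k v @[k --> \oo] --> (0 : 'cV[R]_n).
Proof.
move=> hc1.
have h : (c ^+ k * l1 v) @[k --> \oo] --> (0 : R).
  rewrite -(mul0r (l1 v)); apply: cvgMr_tmp; apply: cvg_expr.
  by rewrite ger0_norm.
apply/cvgr0Pnorm_le => eps eps0.
have hk := cvgr0_norm_le _ h _ eps0.
near=> k.
rewrite -/(mx_norm _) mx_normrE; apply: bigmax_le; first exact: ltW.
move=> [i j] _ /=; rewrite (ord1 j).
apply: le_trans (entry_le_l1 _ _) _.
apply: le_trans (l1_it _ _) _.
apply: le_trans (ler_norm _) _.
near: k; apply: hk; exact: _.
Unshelve. all: by end_near.
Qed.
End Aux.
Arguments it {R n}.
Arguments l1 {R n}.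

Theorem lemma1 (R : realType) (n : nat) (e : rel 'I_n) (m : R)
    (xs : 'cV[R]_n) :
  (2 <= n)%N ->
  no_dangling e ->
  0 < m < 1 ->
  is_pagerank (hyperlink R e) m xs ->
  [/\ zseq (hyperlink R e) m k @[k --> \oo] --> (0 : 'cV[R]_n),
      (forall k : nat,
         vle (xseq (hyperlink R e) m k) (xseq (hyperlink R e) m k.+1) /\
         vle (xseq (hyperlink R e) m k.+1) xs)
    & xseq (hyperlink R e) m k @[k --> \oo] --> xs].
Proof.
move=> hn hnd /andP[m0 m1] [hfix hsum].
set A := hyperlink R e.
set c := 1 - m.
have hc0 : 0 <= c by rewrite subr_ge0 ltW.
have hc1 : c < 1 by rewrite ltrBlDr ltrDl.
have hA0 : forall i j, 0 <= A i j.
  move=> i j; rewrite mxE; case: ifP => // _; rewrite invr_ge0 ler0n //.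
have hA1 : forall j, \sum_i A i j = 1.
  move=> j; rewrite (eq_bigr (fun i => if i \in out_nbrs e j then (outdeg e j)%:R^-1 else 0));
    last by move=> i _; rewrite mxE.
  rewrite -big_mkcond /= sumr_const -[LHS]mulr_natr mulVf //.
  by rewrite pnatr_eq0 -lt0n; apply: hnd.
set z0 : 'cV[R]_n := (m / n%:R) *: ones R n.
have hz0 : forall i, 0 <= z0 i 0.
  by move=> i; rewrite !mxE mulr1 divr_ge0 ?ler0n // ltW.
have hz : forall k, zseq A m k = it A c k z0.
  by elim=> [|k IH] //=; rewrite IH.
have hz0e : z0 = xs - c *: (A *m xs).
  by apply/eqP; rewrite eq_sym subr_eq addrC -hfix.
have hx : forall k, xseq A m k = xs - it A c k.+1 xs.
  elim=> [|k IH] /=.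
    exact: hz0e.
  rewrite IH hz.
  have -> : it A c k z0 = it A c k xs - it A c k (c *: (A *m xs)).
    by rewrite -it_lin -hz0e.
  rewrite mulmxBr scalerBr.
  have -> : forall j (v : 'cV[R]_n), c *: (A *m it A c j v) = it A c j.+1 v by [].
  have -> : forall j (v : 'cV[R]_n), it A c j (c *: (A *m v)) = it A c j.+1 v.
    move=> j v; rewrite /it -iterSr //.
  by rewrite addrA subrK.
have hxs0 : forall i1, 0 <= xs i1 0.
  have hS : \sum_i xs i 0 = 1.
    have h1 := congr1 (fun M : 'M[R]_1 => M 0 0) hsum.
    rewrite /= !mxE in h1; rewrite eqxx /= in h1; apply: etrans _ h1.
    by apply: eq_bigr => i _; rewrite !mxE mul1r.
  have hl : l1 xs <= c * l1 xs + m.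
    rewrite {1}hfix /l1.
    apply: (@le_trans _ _ (\sum_i (`|((c *: (A *m xs)) i 0)| + `|(z0 i 0)|))).
      by apply: ler_sum => i _; rewrite mxE; apply: ler_normD.
    rewrite big_split /=; apply: lerD.
      change (l1 (c *: (A *m xs)) <= c * l1 xs); rewrite l1Z ger0_norm // ler_wpM2l //; exact: l1_contr.
    have -> : \sum_i `|z0 i 0| = \sum_(i < n) (m / n%:R).
      by apply: eq_bigr => i _; rewrite ger0_norm ?hz0 // !mxE mulr1.
    rewrite sumr_const card_ord -[_ *+ n]mulr_natr divfK // pnatr_eq0 -lt0n.
    by apply: leq_trans hn.
  have hl1 : l1 xs <= 1.
    have : m * l1 xs <= m * 1.
      move: hl; rewrite /c mulrBl mul1r mulr1 => hl.
      by rewrite -(lerD2r (l1 xs - m * l1 xs)) addrCA subrr addr0 addrC.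
    by rewrite ler_pM2l.
  have hsum0 : \sum_i (`|xs i 0| - xs i 0) <= 0.
    by rewrite sumrB hS subr_le0.
  move=> i.
  have hi : `|xs i 0| - xs i 0 <= 0.
    apply: le_trans hsum0; rewrite (bigD1 i) //= lerDl.
    by apply: sumr_ge0 => j _; rewrite subr_ge0 ler_norm.
  by move: hi; rewrite subr_le0 => /(le_trans (normr_ge0 _)).
split.
- under eq_fun do rewrite hz. exact: it_cvg.
- move=> k; split => i.
    have h := @it_ge0 R n A c hA0 hc0 k.+1 z0 hz0 i.
    by rewrite /= hz [X in _ <= X]mxE lerDl.
  have h := @it_ge0 R n A c hA0 hc0 k.+2 xs hxs0 i.
  by rewrite hx mxE [X in _ + X <= _]mxE gerDl oppr_le0.
- have h1 : it A c k.+1 xs @[k --> \oo] --> (0 : 'cV[R]_n).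
    have := @it_cvg R n A c hA0 hA1 hc0 xs hc1.
    by rewrite -(cvg_shiftS (fun k => it A c k xs)).
  under eq_fun do rewrite hx.
  have := cvgB (cvg_cst xs) h1.
  rewrite subr0 => h; apply: h; exact: eventually_filter.
Qed.
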